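(* Let $t\in\mathfrak{T}_2$ with $t>0$ on $\mathbb{T}^2$ and $n_1(t)\ge1$. Then for every $z\in\mathbb{A}_{\sigma_1(t)}$, $$\Re\,\Gamma_zt\ge\tfrac12\min t\ \text{ on }\mathbb{T},\qquad \|\Gamma_zt\|_\infty\le\|t\|_\infty+\tfrac12\min t,\qquad \rho(\Gamma_zt)\ge\rho(t)/(2e).$$
   Context: $\mathbb{T}=\mathbb{R}/\mathbb{Z}$, $e_j(x)=e^{2\pi i jx}$, $e_{(j,k)}(x,y)=e_j(x)e_k(y)$. $\mathfrak{T}_d$: trigonometric polynomials on $\mathbb{T}^d$. For $t\in\mathfrak{T}_2$: $\|\widehat t\|_1=\sum_{(j,k)}|\widehat t(j,k)|$, $n_1(t)=\max\{|j|:\widehat t(j,k)\ne0\text{ for some }k\}$, $\rho(t)=\min\{1,\min t/(2e\|\widehat t\|_1)\}$, $\sigma_1(t)=\rho(t)/n_1(t)$. For $z\in\mathbb{C}\setminus\{0\}$, $\Gamma_z:\mathfrak{T}_2\to\mathfrak{T}_1$ is the linear map with $\Gamma_ze_{(j,k)}=z^je_k$. For $s\in\mathfrak{T}_1$ with $\Re s>0$, $\rho(s)=\min\{1,\min\Re s/(2e\|\widehat s\|_1)\}$ with $\|\widehat s\|_1=\sum_k|\widehat s(k)|$. $\mathbb{A}_\sigma=\{z:e^{-\sigma}\le|z|\le e^\sigma\}$. *)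

(* Defs.v *)
From Stdlib Require Import Reals Lra ZArith List.
Open Scope R_scope.

Definition Cx := (R * R)%type.
Definition Cre (z : Cx) : R := fst z.
Definition Cim (z : Cx) : R := snd z.
Definition C0 : Cx := (0, 0).
Definition C1 : Cx := (1, 0).
Definition Cadd (z w : Cx) : Cx := (fst z + fst w, snd z + snd w).
Definition Cmul (z w : Cx) : Cx :=
  (fst z * fst w - snd z * snd w, fst z * snd w + snd z * fst w).
Definition Cmod (z : Cx) : R := sqrt (fst z ^ 2 + snd z ^ 2).
Definition Cinv (z : Cx) : Cx :=
  (fst z / (fst z ^ 2 + snd z ^ 2), - snd z / (fst z ^ 2 + snd z ^ 2)).
Fixpoint Cpown (z : Cx) (n : nat) : Cx :=
  match n with O => C1 | S n' => Cmul z (Cpown z n') end.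
(** integer powers z^j (z <> 0 for negative j) *)
Definition Cpow (z : Cx) (j : Z) : Cx :=
  match j with
  | Z0 => C1
  | Zpos p => Cpown z (Pos.to_nat p)
  | Zneg p => Cinv (Cpown z (Pos.to_nat p))
  end.

Definition ech (j : Z) (x : R) : Cx :=
  (cos (2 * PI * IZR j * x), sin (2 * PI * IZR j * x)).

Definition zrange (N : nat) : list Z :=
  map (fun i => (Z.of_nat i - Z.of_nat N)%Z) (seq 0 (2 * N + 1)).
Definition sumZ (N : nat) (f : Z -> R) : R :=
  fold_right (fun j acc => f j + acc) 0 (zrange N).
Definition CsumZ (N : nat) (f : Z -> Cx) : Cx :=
  fold_right (fun j acc => Cadd (f j) acc) C0 (zrange N).

(** A trigonometric polynomial on T^2 is given by its Fourier coefficients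
    c : Z -> Z -> Cx, supported in the box [-N,N]^2. *)
Definition supported2 (N : nat) (c : Z -> Z -> Cx) : Prop :=
  forall j k, (Z.of_nat N < Z.abs j \/ Z.of_nat N < Z.abs k)%Z -> c j k = C0.
Definition supported1 (N : nat) (d : Z -> Cx) : Prop :=
  forall k, (Z.of_nat N < Z.abs k)%Z -> d k = C0.

Definition eval2 (N : nat) (c : Z -> Z -> Cx) (x y : R) : Cx :=
  CsumZ N (fun j => CsumZ N (fun k => Cmul (c j k) (Cmul (ech j x) (ech k y)))).
Definition eval1 (N : nat) (d : Z -> Cx) (x : R) : Cx :=
  CsumZ N (fun k => Cmul (d k) (ech k x)).

Definition l1norm2 (N : nat) (c : Z -> Z -> Cx) : R :=
  sumZ N (fun j => sumZ N (fun k => Cmod (c j k))).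
Definition l1norm1 (N : nat) (d : Z -> Cx) : R :=
  sumZ N (fun k => Cmod (d k)).

Definition is_n1 (c : Z -> Z -> Cx) (n : Z) : Prop :=
  (exists j k, Z.abs j = n /\ c j k <> C0) /\
  (forall j k, c j k <> C0 -> (Z.abs j <= n)%Z).

(** Gamma_z : e_(j,k) |-> z^j e_k, acting on coefficients *)
Definition Gamma (z : Cx) (N : nat) (c : Z -> Z -> Cx) : Z -> Cx :=
  fun k => CsumZ N (fun j => Cmul (Cpow z j) (c j k)).

(** minima / suprema over T^2 and T (functions on R, 1-periodic) *)
Definition is_min2 (f : R -> R -> R) (m : R) : Prop :=
  (forall x y, m <= f x y) /\ (exists x y, f x y = m).
Definition is_min1 (f : R -> R) (m : R) : Prop :=
  (forall x, m <= f x) /\ (exists x, f x = m).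
Definition is_sup2 (f : R -> R -> R) (M : R) : Prop :=
  is_lub (fun r => exists x y, r = f x y) M.

Definition rho_of (minval l1 : R) : R := Rmin 1 (minval / (2 * exp 1 * l1)).

(* Main.v *)
Require Import Defs.
From Stdlib Require Import Reals ZArith Lra Lia List Ratan Classical.
From Coquelicot Require Complex.
Open Scope R_scope.

Definition csum (l : list Z) (f : Z -> Cx) : Cx := fold_right (fun j acc => Cadd (f j) acc) C0 l.
Definition rsum (l : list Z) (f : Z -> R) : R := fold_right (fun j acc => f j + acc) 0 l.

Lemma csum_ext l f g : (forall j, f j = g j) -> csum l f = csum l g.
Proof. intro H; induction l; simpl; [reflexivity| rewrite H, IHl; reflexivity]. Qed.
Lemma rsum_ext l f g : (forall j, f j = g j) -> rsum l f = rsum l g.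
Proof. intro H; induction l; simpl; [reflexivity| rewrite H, IHl; reflexivity]. Qed.

Lemma csum_add l f g : csum l (fun j => Cadd (f j) (g j)) = Cadd (csum l f) (csum l g).
Proof. induction l; simpl.
- unfold Cadd, C0; simpl; f_equal; ring.
- rewrite IHl. unfold Cadd; simpl; f_equal; ring. Qed.

Lemma csum_zero l : csum l (fun _ => C0) = C0.
Proof. induction l; simpl; [reflexivity| rewrite IHl; unfold Cadd, C0; simpl; f_equal; ring]. Qed.

Lemma csum_mulr l f w : Cmul (csum l f) w = csum l (fun j => Cmul (f j) w).
Proof. induction l; simpl.
- unfold Cmul, C0; simpl; f_equal; ring.
- rewrite <- IHl. unfold Cadd, Cmul; simpl; f_equal; ring. Qed.

Lemma csum_swap l1 l2 (F : Z -> Z -> Cx) :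
  csum l1 (fun k => csum l2 (fun j => F j k)) = csum l2 (fun j => csum l1 (fun k => F j k)).
Proof. induction l1; simpl.
- symmetry; apply csum_zero.
- rewrite IHl1. rewrite <- csum_add. reflexivity. Qed.

Lemma rsum_add l f g : rsum l (fun j => f j + g j) = rsum l f + rsum l g.
Proof. induction l; simpl; [ring| rewrite IHl; ring]. Qed.
Lemma rsum_zero l : rsum l (fun _ => 0) = 0.
Proof. induction l; simpl; [ring| rewrite IHl; ring]. Qed.
Lemma rsum_swap l1 l2 (F : Z -> Z -> R) :
  rsum l1 (fun k => rsum l2 (fun j => F j k)) = rsum l2 (fun j => rsum l1 (fun k => F j k)).
Proof. induction l1; simpl.
- symmetry; apply rsum_zero.
- rewrite IHl1. rewrite <- rsum_add. reflexivity. Qed.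
Lemma rsum_le l f g : (forall j, f j <= g j) -> rsum l f <= rsum l g.
Proof. intro H; induction l; simpl; [lra| specialize (H a); lra]. Qed.
Lemma rsum_scal l a f : rsum l (fun j => a * f j) = a * rsum l f.
Proof. induction l; simpl; [ring| rewrite IHl; ring]. Qed.
Lemma rsum_ge0 l f : (forall j, 0 <= f j) -> 0 <= rsum l f.
Proof. intro H; induction l; simpl; [lra| specialize (H a); lra]. Qed.

Lemma Cmod_ge0 z : 0 <= Cmod z.
Proof. apply Complex.Cmod_ge_0. Qed.
Lemma Cmod_tri z w : Cmod (Cadd z w) <= Cmod z + Cmod w.
Proof. apply (Complex.Cmod_triangle z w). Qed.
Lemma Cmod_mul z w : Cmod (Cmul z w) = Cmod z * Cmod w.
Proof. apply (Complex.Cmod_mult z w). Qed.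
Lemma Cmod_C0 : Cmod C0 = 0.
Proof. apply Complex.Cmod_0. Qed.
Lemma re_le z : Cre z <= Cmod z.
Proof. pose proof (Complex.re_le_Cmod z). unfold Complex.Re in H. unfold Cre.
  pose proof (Rle_abs (fst z)). change (Complex.Cmod z) with (Cmod z) in H. lra. Qed.
Lemma Cmod_real a : Cmod (a, 0) = Rabs a.
Proof. apply (Complex.Cmod_R a). Qed.

Lemma cmod_csum l f : Cmod (csum l f) <= rsum l (fun j => Cmod (f j)).
Proof. induction l; simpl.
- rewrite Cmod_C0; lra.
- eapply Rle_trans; [apply Cmod_tri|]. lra. Qed.

Definition scal (a : R) (w : Cx) : Cx := (a * fst w, a * snd w).
Lemma scal_mul a w : scal a w = Cmul (a, 0) w.
Proof. unfold scal, Cmul; simpl; f_equal; ring. Qed.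
Lemma Cmod_scal a w : Cmod (scal a w) = Rabs a * Cmod w.
Proof. rewrite scal_mul, Cmod_mul, Cmod_real; reflexivity. Qed.

Lemma Cmod_ech j x : Cmod (ech j x) = 1.
Proof. unfold Cmod, ech; simpl. rewrite Rmult_1_r, Rmult_1_r.
  rewrite (Rplus_comm (cos _ * _)). rewrite <- (Rsqr_def (sin _)), <- (Rsqr_def (cos _)).
  rewrite sin2_cos2. apply sqrt_1. Qed.

Lemma Cre_add z w : Cre (Cadd z w) = Cre z + Cre w.
Proof. reflexivity. Qed.

Lemma polar z : 0 < Cmod z -> exists phi, z = (Cmod z * cos phi, Cmod z * sin phi).
Proof.
  intro Hr. destruct z as [u v]. set (r := Cmod (u, v)) in *.
  assert (Hr2 : r * r = u * u + v * v).
  { unfold r, Cmod; simpl. rewrite sqrt_sqrt; [ring|nra]. }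
  set (a := u / r). set (b := v / r).
  assert (Hab : a * a + b * b = 1).
  { unfold a, b. replace (u / r * (u / r) + v / r * (v / r)) with ((u*u+v*v)/(r*r)) by (field; lra). rewrite <- Hr2. field. lra. }
  assert (Ha : -1 <= a <= 1) by nra.
  assert (Hs : sqrt (1 - a²) = Rabs b).
  { replace (1 - a²) with (b * b) by (unfold Rsqr; lra). apply sqrt_Rsqr_abs. }
  assert (Hu : u = r * a) by (unfold a; field; lra).
  assert (Hv : v = r * b) by (unfold b; field; lra).
  destruct (Rle_dec 0 b) as [Hb|Hb].
  - exists (acos a). rewrite cos_acos, sin_acos, Hs by lra. rewrite Rabs_pos_eq by lra.
    rewrite <- Hu, <- Hv. reflexivity.
  - exists (- acos a). rewrite cos_neg, sin_neg, cos_acos, sin_acos, Hs by lra.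
    rewrite Rabs_left by lra. rewrite <- Hu. f_equal. lra.
Qed.

Lemma pown_polar a phi n :
  Cpown (a * cos phi, a * sin phi) n = (a ^ n * cos (INR n * phi), a ^ n * sin (INR n * phi)).
Proof.
  induction n.
  - simpl. rewrite Rmult_0_l, cos_0, sin_0. unfold C1. apply injective_projections; simpl; ring.
  - simpl Cpown. rewrite IHn. rewrite S_INR.
    replace ((INR n + 1) * phi) with (phi + INR n * phi) by ring.
    rewrite cos_plus, sin_plus. unfold Cmul; simpl; f_equal; ring.
Qed.

Lemma cpow_polar r phi j : 0 < r ->
  Cpow (r * cos phi, r * sin phi) j =
  (exp (IZR j * ln r) * cos (IZR j * phi), exp (IZR j * ln r) * sin (IZR j * phi)).
Proof.
  intro Hr. destruct j as [|p|p]; simpl Cpow.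
  - rewrite !Rmult_0_l, exp_0, cos_0, sin_0. unfold C1. apply injective_projections; simpl; ring.
  - rewrite pown_polar. rewrite <- (Rpower_pow _ _ Hr). unfold Rpower.
    rewrite INR_IPR. reflexivity.
  - rewrite pown_polar. rewrite <- (Rpower_pow _ _ Hr). unfold Rpower.
    rewrite INR_IPR. change (IZR (Z.neg p)) with (- IPR p).
    set (q := IPR p). unfold Cinv; simpl.
    set (E := exp (q * ln r)). assert (He : 0 < E) by apply exp_pos.
    assert (Hc : E * cos (q * phi) * (E * cos (q * phi) * 1) + E * sin (q * phi) * (E * sin (q * phi) * 1)
               = E * E).
    { pose proof (sin2_cos2 (q * phi)). unfold Rsqr in H. nra. }
    rewrite Hc. rewrite !Ropp_mult_distr_l_reverse, exp_Ropp, cos_neg, sin_neg.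
    fold E. f_equal; field; lra.
Qed.

Lemma exp_le_mono a b : a <= b -> exp a <= exp b.
Proof. intro H; destruct (Req_dec a b) as [->|Hn]; [lra|]. left; apply exp_increasing; lra. Qed.

Lemma exp_bound u : Rabs u <= 1 -> Rabs (exp u - 1) <= exp 1 * Rabs u /\ exp u <= exp 1.
Proof.
  intro Hu. assert (He1 : exp u <= exp 1) by (apply exp_le_mono; pose proof (Rle_abs u); lra).
  split; [|exact He1].
  assert (H1e : 1 <= exp 1) by (pose proof (exp_ineq1_le 1); lra).
  destruct (Rle_dec 0 u) as [Hp|Hn].
  - pose proof (exp_ineq1_le (- u)) as H. rewrite exp_Ropp in H.
    pose proof (exp_pos u). pose proof (exp_ineq1_le u).
    assert (exp u - 1 <= u * exp u).
    { apply Rmult_le_compat_l with (r := exp u) in H; [|lra].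
      rewrite Rinv_r in H by lra. nra. }
    rewrite Rabs_pos_eq by lra. rewrite Rabs_pos_eq by lra. nra.
  - pose proof (exp_ineq1_le u). assert (exp u <= 1).
    { replace 1 with (exp 0) by apply exp_0. apply exp_le_mono; lra. }
    rewrite Rabs_left1 by lra. rewrite Rabs_left by lra. nra.
Qed.

Lemma eval2_eq N c x y : eval2 N c x y =
  csum (zrange N) (fun j => csum (zrange N) (fun k => Cmul (c j k) (Cmul (ech j x) (ech k y)))).
Proof. reflexivity. Qed.
Lemma eval1_gamma_eq z N c y : eval1 N (Gamma z N c) y =
  csum (zrange N) (fun k => Cmul (csum (zrange N) (fun j => Cmul (Cpow z j) (c j k))) (ech k y)).
Proof. reflexivity. Qed.
Lemma l1norm2_eq N c : l1norm2 N c = rsum (zrange N) (fun j => rsum (zrange N) (fun k => Cmod (c j k))).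
Proof. reflexivity. Qed.
Lemma l1norm1_gamma_eq z N c : l1norm1 N (Gamma z N c) =
  rsum (zrange N) (fun k => Cmod (csum (zrange N) (fun j => Cmul (Cpow z j) (c j k)))).
Proof. reflexivity. Qed.
Lemma eval1_eq N d y : eval1 N d y = csum (zrange N) (fun k => Cmul (d k) (ech k y)).
Proof. reflexivity. Qed.
Lemma l1norm1_eq N d : l1norm1 N d = rsum (zrange N) (fun k => Cmod (d k)).
Proof. reflexivity. Qed.

Lemma eval2_le N c x y : Cmod (eval2 N c x y) <= l1norm2 N c.
Proof.
  rewrite eval2_eq, l1norm2_eq. eapply Rle_trans; [apply cmod_csum|].
  apply rsum_le; intro j. eapply Rle_trans; [apply cmod_csum|].
  apply rsum_le; intro k. rewrite !Cmod_mul, !Cmod_ech. lra.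
Qed.

Lemma eval1_le N d y : Cmod (eval1 N d y) <= l1norm1 N d.
Proof.
  rewrite eval1_eq, l1norm1_eq. eapply Rle_trans; [apply cmod_csum|].
  apply rsum_le; intro k. rewrite !Cmod_mul, !Cmod_ech. lra.
Qed.

Lemma ech_polar j phi : ech j (phi / (2 * PI)) = (cos (IZR j * phi), sin (IZR j * phi)).
Proof. unfold ech. replace (2 * PI * IZR j * (phi / (2 * PI))) with (IZR j * phi).
  reflexivity. pose proof PI_RGT_0. field. lra. Qed.

Lemma decomp N c r phi y : 0 < r ->
  let z := (r * cos phi, r * sin phi) in
  let E j := exp (IZR j * ln r) in
  let x0 := phi / (2 * PI) in
  eval1 N (Gamma z N c) y = Cadd (eval2 N c x0 y)
    (csum (zrange N) (fun j => csum (zrange N) (fun k =>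
        scal (E j - 1) (Cmul (c j k) (Cmul (ech j x0) (ech k y)))))).
Proof.
  intros Hr z E x0. rewrite eval1_gamma_eq, eval2_eq.
  rewrite (csum_ext _ _ (fun k => csum (zrange N) (fun j => Cmul (Cmul (Cpow z j) (c j k)) (ech k y))))
    by (intro k; apply csum_mulr).
  rewrite csum_swap. rewrite <- csum_add. apply csum_ext; intro j.
  rewrite <- csum_add. apply csum_ext; intro k.
  unfold z, x0, E. rewrite cpow_polar, ech_polar by exact Hr.
  destruct (c j k) as [a b]. destruct (ech k y) as [p q].
  unfold Cmul, Cadd, scal; simpl. f_equal; ring.
Qed.

Lemma cmod_cpow r phi j : 0 < r -> Cmod (Cpow (r * cos phi, r * sin phi) j) = exp (IZR j * ln r).
Proof. intro Hr. rewrite cpow_polar by exact Hr.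
  pose proof (Cmod_scal (exp (IZR j * ln r)) (ech j (phi / (2*PI)))) as H.
  rewrite Cmod_ech, ech_polar in H. unfold scal in H; simpl in H. rewrite H.
  rewrite Rabs_pos_eq by (left; apply exp_pos). ring. Qed.

Lemma re_abs_le z : Rabs (Cre z) <= Cmod z.
Proof. apply (Complex.re_le_Cmod z). Qed.

Theorem mainTheorem11 :
  forall (N : nat) (c : Z -> Z -> Cx) (n1 : Z) (m M : R),
    supported2 N c ->
    (forall x y, Cim (eval2 N c x y) = 0 /\ 0 < Cre (eval2 N c x y)) ->
    is_n1 c n1 -> (1 <= n1)%Z ->
    is_min2 (fun x y => Cre (eval2 N c x y)) m ->
    is_sup2 (fun x y => Cmod (eval2 N c x y)) M ->
    let sigma1 := rho_of m (l1norm2 N c) / IZR n1 in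
    forall z : Cx,
      exp (- sigma1) <= Cmod z <= exp sigma1 ->
      (forall x, m / 2 <= Cre (eval1 N (Gamma z N c) x)) /\
      (forall x, Cmod (eval1 N (Gamma z N c) x) <= M + m / 2) /\
      (forall m' : R, is_min1 (fun x => Cre (eval1 N (Gamma z N c) x)) m' ->
         rho_of m' (l1norm1 N (Gamma z N c)) >= rho_of m (l1norm2 N c) / (2 * exp 1)).
Proof.
  intros N c n1 m M Hsupp Ht Hn1 Hn1pos Hmin Hsup sigma1 z Hz.
  set (L := l1norm2 N c) in *.
  destruct Hmin as [Hmle [x1 [y1 Hxy1]]].
  assert (Hm : 0 < m) by (rewrite <- Hxy1; apply Ht).
  assert (HL : m <= L).
  { rewrite <- Hxy1. eapply Rle_trans; [apply re_le|]. apply eval2_le. }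
  assert (He1 : 1 <= exp 1) by (pose proof (exp_ineq1_le 1); lra).
  set (rho := rho_of m L) in *.
  assert (Hrho1 : rho <= 1) by apply Rmin_l.
  assert (Hrho2 : rho <= m / (2 * exp 1 * L)) by apply Rmin_r.
  assert (Hrho0 : 0 <= rho).
  { unfold rho, rho_of. apply Rmin_glb; [lra|]. left. apply Rdiv_lt_0_compat; [lra|].
    apply Rmult_lt_0_compat; lra. }
  assert (Hn1R : 1 <= IZR n1) by (apply IZR_le in Hn1pos; exact Hn1pos).
  assert (Hsig0 : 0 <= sigma1) by (unfold sigma1; unfold Rdiv; apply Rmult_le_pos; [lra| left; apply Rinv_0_lt_compat; lra]).
  set (r := Cmod z) in *.
  assert (Hr : 0 < r) by (pose proof (exp_pos (- sigma1)); lra).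
  assert (Hlnr : Rabs (ln r) <= sigma1).
  { apply Rabs_le. split.
    - destruct (Rlt_le_dec (ln r) (- sigma1)) as [Hlt|]; [|lra].
      apply exp_increasing in Hlt. rewrite exp_ln in Hlt by exact Hr. lra.
    - destruct (Rlt_le_dec sigma1 (ln r)) as [Hlt|]; [|lra].
      apply exp_increasing in Hlt. rewrite exp_ln in Hlt by exact Hr. lra. }
  destruct (polar z Hr) as [phi Hphi]. fold r in Hphi.
  set (E := fun j => exp (IZR j * ln r)).
  assert (Hbd : forall j k, c j k <> C0 -> Rabs (E j - 1) <= m / (2 * L) /\ E j <= exp 1).
  { intros j k Hc. destruct Hn1 as [_ Hn1b]. specialize (Hn1b j k Hc).
    assert (Hu : Rabs (IZR j * ln r) <= rho).
    { rewrite Rabs_mult, <- abs_IZR. apply IZR_le in Hn1b.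
      replace rho with (IZR n1 * sigma1) by (unfold sigma1; fold L; fold rho; field; lra).
      apply Rmult_le_compat; try lra; try apply Rabs_pos. apply IZR_le; lia. }
    destruct (exp_bound (IZR j * ln r)) as [H1 H2]; [lra|].
    split; [|exact H2]. eapply Rle_trans; [exact H1|].
    apply Rle_trans with (exp 1 * rho); [apply Rmult_le_compat_l; lra|].
    apply Rmult_le_compat_l with (r := exp 1) in Hrho2; [|lra].
    replace (exp 1 * (m / (2 * exp 1 * L))) with (m / (2 * L)) in Hrho2 by (field; lra). lra. }
  assert (Hterm : forall j k, Rabs (E j - 1) * Cmod (c j k) <= m / (2 * L) * Cmod (c j k)).
  { intros j k. destruct (Classical_Prop.classic (c j k = C0)) as [->|Hc].
    - rewrite Cmod_C0; lra.
    - apply Rmult_le_compat_r; [apply Cmod_ge0|]. apply (Hbd j k Hc). }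
  assert (Hdec : forall y, eval1 N (Gamma z N c) y = Cadd (eval2 N c (phi / (2 * PI)) y)
    (csum (zrange N) (fun j => csum (zrange N) (fun k =>
        scal (E j - 1) (Cmul (c j k) (Cmul (ech j (phi / (2 * PI))) (ech k y))))))).
  { intro y. rewrite Hphi. apply decomp. exact Hr. }
  assert (HD : forall y, Cmod (csum (zrange N) (fun j => csum (zrange N) (fun k =>
        scal (E j - 1) (Cmul (c j k) (Cmul (ech j (phi / (2 * PI))) (ech k y)))))) <= m / 2).
  { intro y. eapply Rle_trans; [apply cmod_csum|].
    apply Rle_trans with (rsum (zrange N) (fun j => rsum (zrange N) (fun k => m / (2 * L) * Cmod (c j k)))).
    - apply rsum_le; intro j. eapply Rle_trans; [apply cmod_csum|].
      apply rsum_le; intro k. rewrite Cmod_scal, !Cmod_mul, !Cmod_ech.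
      specialize (Hterm j k). lra.
    - rewrite (rsum_ext _ _ (fun j => m / (2 * L) * rsum (zrange N) (fun k => Cmod (c j k))))
        by (intro j; apply rsum_scal).
      rewrite rsum_scal. change (rsum (zrange N) (fun j : Z => rsum (zrange N) (fun k : Z => Cmod (c j k)))) with L. right; field; lra. }
  assert (P1 : forall x, m / 2 <= Cre (eval1 N (Gamma z N c) x)).
  { intro x. rewrite Hdec, Cre_add.
    pose proof (Hmle (phi / (2 * PI)) x). simpl in H.
    pose proof (re_abs_le (csum (zrange N) (fun j => csum (zrange N) (fun k =>
        scal (E j - 1) (Cmul (c j k) (Cmul (ech j (phi / (2 * PI))) (ech k x))))))).
    specialize (HD x). pose proof (Rle_abs (- Cre (csum (zrange N) (fun j => csum (zrange N) (fun k =>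
        scal (E j - 1) (Cmul (c j k) (Cmul (ech j (phi / (2 * PI))) (ech k x)))))))).
    rewrite Rabs_Ropp in H1. lra. }
  split; [exact P1|]. split.
  { intro x. rewrite Hdec. eapply Rle_trans; [apply Cmod_tri|].
    specialize (HD x). destruct Hsup as [Hub _].
    assert (Cmod (eval2 N c (phi / (2 * PI)) x) <= M) by (apply Hub; eauto).
    lra. }
  intros m' [Hm'le [x2 Hx2]].
  assert (Hm' : m / 2 <= m') by (rewrite <- Hx2; apply P1).
  set (L1 := l1norm1 N (Gamma z N c)).
  assert (HL1 : m / 2 <= L1).
  { eapply Rle_trans; [apply (P1 x2)|]. eapply Rle_trans; [apply re_le|]. apply eval1_le. }
  assert (HL1b : L1 <= exp 1 * L).
  { unfold L1. rewrite l1norm1_gamma_eq.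
    apply Rle_trans with (rsum (zrange N) (fun k => rsum (zrange N) (fun j => exp 1 * Cmod (c j k)))).
    - apply rsum_le; intro k. eapply Rle_trans; [apply cmod_csum|].
      apply rsum_le; intro j. rewrite Cmod_mul. rewrite Hphi, cmod_cpow by exact Hr.
      destruct (Classical_Prop.classic (c j k = C0)) as [->|Hc].
      + rewrite Cmod_C0; lra.
      + apply Rmult_le_compat_r; [apply Cmod_ge0|]. apply (Hbd j k Hc).
    - rewrite rsum_swap.
      rewrite (rsum_ext _ _ (fun j => exp 1 * rsum (zrange N) (fun k => Cmod (c j k))))
        by (intro j; apply rsum_scal).
      rewrite rsum_scal. right; reflexivity. }
  unfold rho_of. apply Rle_ge. apply Rmin_glb.
  - apply Rle_trans with (1 / (2 * exp 1)).
    + unfold Rdiv. apply Rmult_le_compat_r; [left; apply Rinv_0_lt_compat; lra| lra].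
    + unfold Rdiv. rewrite Rmult_1_l. apply Rle_trans with (/ 1); [|rewrite Rinv_1; lra].
      apply Rinv_le_contravar; lra.
  - apply Rle_trans with (m / (2 * exp 1 * L) / (2 * exp 1)).
    + unfold Rdiv at 1 3. apply Rmult_le_compat_r; [left; apply Rinv_0_lt_compat; lra| exact Hrho2].
    + assert (Hk : m * L1 <= 2 * exp 1 * L * m') by nra.
      replace (m / (2 * exp 1 * L) / (2 * exp 1)) with ((m * L1) * / (4 * exp 1 * exp 1 * L * L1)) by (field; lra).
      replace (m' / (2 * exp 1 * L1)) with ((2 * exp 1 * L * m') * / (4 * exp 1 * exp 1 * L * L1)) by (field; lra).
      apply Rmult_le_compat_r; [left; apply Rinv_0_lt_compat|exact Hk].
      repeat apply Rmult_lt_0_compat; lra.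
Qed.
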